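(* Without relabeling (model $\alpha$; this holds even if nodes know their neighbours and ports may be reassigned), for every $n$ there exist labeled graphs on $n$ nodes — at least $(1-2^{-\lfloor n/3\rfloor})\lfloor n/3\rfloor!$ of them when $n$ is a multiple of $3$ — such that every routing scheme with stretch factor $<2$ on such a graph has, at each of $n/3$ nodes, a local routing function requiring at least $(n/3)\log n-O(n)$ bits; hence the complete scheme requires at least $(n^2/9)\log n-O(n^2)$ bits. Specifically, for $n=3k$ the graphs are $G_k$ on nodes $v_1,\dots,v_{3k}$, where for each $k+1\le i\le 2k$ node $v_i$ is adjacent to $v_{i+k}$ and to each of $v_1,\dots,v_k$ (and there are no other edges), the nodes $v_1,\dots,v_{2k}$ carry a fixed labeling by $\{1,\dots,2k\}$, and the nodes $v_{2k+1},\dots,v_{3k}$ are labeled by a permutation $\pi$ of $\{2k+1,\dots,3k\}$ with Kolmogorov complexity $C(\pi)\ge k\log k-O(k)$; the bound holds at the nodes $v_1,\dots,v_k$. For $n=3k-1$ or $3k-2$ one uses $G_k$ with $v_k$ (and $v_{k-1}$) removed.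
   Context: $C(x)$ is Kolmogorov complexity w.r.t. a fixed universal Turing machine; $\log$ is base 2. A routing scheme consists of a local routing function at each node $u$ returning, for each destination label $v\ne u$, an edge at $u$; its stretch factor is the maximum over pairs of the ratio of route length to distance. Model $\alpha$: node labels are fixed and cannot be changed. *)

(* Defs.v *)
From mathcomp Require Import all_boot all_fingroup.
From Stdlib Require Import Reals.
Set Implicit Arguments. Unset Strict Implicit. Unset Printing Implicit Defensive.

Inductive prf : Type :=
| PZero : prf
| PSucc : prf
| PProj : nat -> prf
| PComp : prf -> list prf -> prf
| PPrec : prf -> prf -> prf
| PMu : prf -> prf.

Inductive eval : prf -> seq nat -> nat -> Prop :=
| eZero v : eval PZero v 0
| eSucc x v : eval PSucc (x :: v) x.+1
| eProj i v : i < size v -> eval (PProj i) v (nth 0 v i)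
| eComp f gs v ys y : evals gs v ys -> eval f ys y -> eval (PComp f gs) v y
| ePrec0 f g v y : eval f v y -> eval (PPrec f g) (0 :: v) y
| ePrecS f g n v r y : eval (PPrec f g) (n :: v) r -> eval g (n :: r :: v) y ->
    eval (PPrec f g) (n.+1 :: v) y
| eMu f v n : eval f (n :: v) 0 ->
    (forall m, m < n -> exists k, 0 < k /\ eval f (m :: v) k) ->
    eval (PMu f) v n
with evals : list prf -> seq nat -> seq nat -> Prop :=
| evNil v : evals nil v [::]
| evCons g gs v y ys : eval g v y -> evals gs v ys -> evals (cons g gs) v (y :: ys).

(* bijection {0,1}^* <-> nat (length-lexicographic order) *)
Definition nat_of_bits (s : seq bool) : nat :=
  (foldl (fun a (b : bool) => a.*2 + b) 1 s).-1.

(* standard (Cantor) coding of finite sequences of naturals *)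
Definition npair (x y : nat) : nat := (x + y) * (x + y).+1 %/ 2 + y.
Definition code_seq (s : seq nat) : nat := foldr (fun x acc => (npair x acc).+1) 0 s.

Definition describes (d : prf) (s : seq bool) (x : nat) : Prop :=
  eval d [:: nat_of_bits s] x.

(* d is additively optimal (universal): C_d <= C_f + O(1) for every partial
   computable f *)
Definition optimal (d : prf) : Prop :=
  forall f : prf, exists c : nat, forall (s : seq bool) (x : nat),
    describes f s x -> exists s', describes d s' x /\ size s' <= size s + c.

Definition KC_ge (d : prf) (x : nat) (b : R) : Prop :=
  forall s, describes d s x -> (b <= INR (size s))%R.

Definition log2 (x : R) : R := (ln x / ln 2)%R.

(* A labeled graph on n nodes: node set 'I_n, node i carries label i+1. *)
Definition simple_graph n (e : rel 'I_n) : Prop :=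
  (forall x y, e x y = e y x) /\ (forall x, ~~ e x x).

Fixpoint reach_in n (e : rel 'I_n) (p : nat) (u v : 'I_n) : bool :=
  match p with
  | 0 => u == v
  | p'.+1 => [exists w, e u w && reach_in e p' w v]
  end.

Definition connected n (e : rel 'I_n) : Prop :=
  forall u v, exists p, reach_in e p u v.

Definition dist_is n (e : rel 'I_n) (u v : 'I_n) (p : nat) : Prop :=
  reach_in e p u v /\ forall q, q < p -> ~~ reach_in e q u v.

(* A routing scheme: F u v = the neighbour of u to which u forwards a message
   with destination (label of) v; the local routing function at u is F u
   restricted to destinations v <> u. *)
Definition routing_scheme n (e : rel 'I_n) (F : 'I_n -> 'I_n -> 'I_n) : Prop :=
  forall u v, u != v -> e u (F u v).

Definition route_len n (F : 'I_n -> 'I_n -> 'I_n) (u v : 'I_n) (m : nat) : Prop :=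
  iter m (fun x => F x v) u = v /\ forall j, j < m -> iter j (fun x => F x v) u != v.

(* stretch factor < 2: for every pair u <> v, (route length)/(distance) < 2
   (over finitely many pairs, max < 2 iff each ratio < 2) *)
Definition stretch_lt2 n (e : rel 'I_n) (F : 'I_n -> 'I_n -> 'I_n) : Prop :=
  forall u v, u != v -> exists m p, route_len F u v m /\ dist_is e u v p /\
    (INR m / INR p < 2)%R.

Definition enc_local n (F : 'I_n -> 'I_n -> 'I_n) (u : 'I_n) : nat :=
  code_seq [seq (if v == u then 0 else (F u v).+1) | v <- enum 'I_n].

(* Node v_i is index i-1.  For j < k the middle node v_(k+1+j) (index k+j) is
   adjacent to v_1..v_k (indices < k) and to v_(2k+1+j); in label terms the
   latter node carries label 2k+1+sigma(j), i.e. pi(2k+1+j) = 2k+1+sigma(j). *)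
Definition Gk_edge0 k (sigma : 'S_k) (x y : 'I_(3 * k)) : bool :=
  ((x < k) && (k <= y) && (y < 2 * k)) ||
  [exists j : 'I_k, (val x == k + j) && (val y == 2 * k + sigma j)].

Definition Gk k (sigma : 'S_k) : rel 'I_(3 * k) :=
  fun x y => Gk_edge0 sigma x y || Gk_edge0 sigma y x.

(* encoding of the permutation pi: labels of v_(2k+1), ..., v_(3k) *)
Definition enc_perm k (sigma : 'S_k) : nat :=
  code_seq [seq (2 * k + sigma j).+1 | j <- enum 'I_k].

Definition Gk_good (d : prf) (c : R) k (sigma : 'S_k) : Prop :=
  forall F, routing_scheme (Gk sigma) F -> stretch_lt2 (Gk sigma) F ->
    forall u : 'I_(3 * k), val u < k ->
      KC_ge d (enc_local F u)
        (INR (3 * k) / 3 * log2 (INR (3 * k)) - c * INR (3 * k))%R.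

(* Main.v *)
Require Import Defs.
From mathcomp Require Import all_boot all_fingroup.
From Stdlib Require Import Reals.
From Stdlib Require Import Lra ClassicalEpsilon.
From Stdlib Require List.
From mathcomp Require Import zify.
Set Implicit Arguments. Unset Strict Implicit. Unset Printing Implicit Defensive.

Definition prf_ind2 (P : prf -> Prop) (HZ : P PZero) (HS : P PSucc)
  (HP : forall i, P (PProj i))
  (HC : forall f gs, P f -> List.Forall P gs -> P (PComp f gs))
  (HR : forall f g, P f -> P g -> P (PPrec f g))
  (HM : forall f, P f -> P (PMu f)) : forall p, P p :=
 fix F p := match p with
 | PZero => HZ | PSucc => HS | PProj i => HP i
 | PComp f gs => HC f gs (F f) ((fix G l := match l return List.Forall P l with
        nil => List.Forall_nil _ | cons g l' => List.Forall_cons _ (F g) (G l') end) gs)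
 | PPrec f g => HR f g (F f) (F g) | PMu f => HM f (F f) end.

Definition detp p := forall v y y', eval p v y -> eval p v y' -> y = y'.

Lemma evals_det gs : List.Forall detp gs -> forall v ys ys', evals gs v ys -> evals gs v ys' -> ys = ys'.
Proof.
elim=> [|g gs' Hg Hgs IH] v ys ys' H1 H2; inversion H1; inversion H2; subst => //.
by rewrite (Hg _ _ _ H3 H9) (IH _ _ _ H6 H12).
Qed.

Lemma eval_det : forall p, detp p.
Proof.
apply: prf_ind2.
- by move=> v y y' H1 H2; inversion H1; inversion H2; subst.
- move=> v y y' H1 H2; inversion H1; inversion H2; subst; congruence.
- move=> i v y y' H1 H2; inversion H1; inversion H2; subst; congruence.
- move=> f gs Hf Hgs v y y' H1 H2; inversion H1; inversion H2; subst.
  have E := evals_det Hgs H3 H9; subst. exact: Hf H6 H12.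
- move=> f g Hf Hg [|n v] y y'.
    by move=> H1; inversion H1.
  elim: n y y' => [|n IH] y y' H1 H2; inversion H1; inversion H2; subst => //.
    exact: Hf H5 H10.
  have E := IH _ _ H6 H13; subst. exact: Hg H7 H14.
- move=> f Hf v y y' H1 H2; inversion H1; inversion H2; subst.
  case: (ltngtP y y') => // Hlt.
  + case: (H8 _ Hlt) => k [Hk Ek]. have := Hf _ _ _ Ek H0. lia.
  + case: (H3 _ Hlt) => k [Hk Ek]. have := Hf _ _ _ Ek H7. lia.
Qed.

Definition cmp n p (F : seq nat -> nat) := forall v, size v = n -> eval p v (F v).

Lemma cmp_ext n p F G : cmp n p F -> (forall v, size v = n -> F v = G v) -> cmp n p G.
Proof. by move=> H E v Hv; rewrite -E //; apply: H. Qed.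

Lemma cmp_proj n i : i < n -> cmp n (PProj i) (fun v => nth 0 v i).
Proof. by move=> Hi v Hv; apply: eProj; rewrite Hv. Qed.

Lemma cmp_zero n : cmp n PZero (fun _ => 0).
Proof. by move=> v _; apply: eZero. Qed.

Lemma cmp_comp1 n f F g G : cmp 1 f F -> cmp n g G ->
  cmp n (PComp f [:: g]) (fun v => F [:: G v]).
Proof.
move=> Hf Hg v Hv; apply: eComp (Hf _ _) => //.
by apply: evCons (Hg _ Hv) (evNil _).
Qed.

Lemma cmp_comp2 n f F g1 G1 g2 G2 : cmp 2 f F -> cmp n g1 G1 -> cmp n g2 G2 ->
  cmp n (PComp f [:: g1; g2]) (fun v => F [:: G1 v; G2 v]).
Proof.
move=> Hf Hg1 Hg2 v Hv; apply: eComp (Hf _ _) => //.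
by apply: evCons (Hg1 _ Hv) (evCons (Hg2 _ Hv) (evNil _)).
Qed.

Lemma cmp_comp3 n f F g1 G1 g2 G2 g3 G3 : cmp 3 f F -> cmp n g1 G1 -> cmp n g2 G2 ->
  cmp n g3 G3 ->
  cmp n (PComp f [:: g1; g2; g3]) (fun v => F [:: G1 v; G2 v; G3 v]).
Proof.
move=> Hf Hg1 Hg2 Hg3 v Hv; apply: eComp (Hf _ _) => //.
by apply: evCons (Hg1 _ Hv) (evCons (Hg2 _ Hv) (evCons (Hg3 _ Hv) (evNil _))).
Qed.

Lemma cmp_succ n g G : cmp n g G -> cmp n (PComp PSucc [:: g]) (fun v => (G v).+1).
Proof.
move=> Hg v Hv; apply: eComp (eSucc _ _).
by apply: evCons (Hg _ Hv) (evNil _).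
Qed.

Fixpoint precf (Fb Gs : seq nat -> nat) (x : nat) (w : seq nat) : nat :=
  match x with 0 => Fb w | x'.+1 => Gs [:: x', precf Fb Gs x' w & w] end.

Lemma cmp_prec n f Fb g Gs : cmp n f Fb -> cmp n.+2 g Gs ->
  cmp n.+1 (PPrec f g) (fun v => precf Fb Gs (head 0 v) (behead v)).
Proof.
move=> Hf Hg [|x w] //= [Hw].
elim: x => [|x IH] /=; first by apply: ePrec0; apply: Hf.
by apply: ePrecS IH (Hg _ _); rewrite /= Hw.
Qed.

Lemma find_iota_le (a : pred nat) B : find a (iota 0 B) <= B.
Proof. by have := find_size a (iota 0 B); rewrite size_iota. Qed.

Lemma cmp_mu n f H B : cmp n.+1 f H -> (forall v, size v = n -> H (B v :: v) = 0) ->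
  cmp n (PMu f) (fun v => find (fun i => H (i :: v) == 0) (iota 0 (B v))).
Proof.
move=> Hf HB v Hv; set x := find _ _.
apply: eMu.
  have: H (x :: v) == 0.
    case: (ltnP x (size (iota 0 (B v)))) => Hx.
      have Hh : has (fun i => H (i :: v) == 0) (iota 0 (B v)) by rewrite has_find.
      have := nth_find 0 Hh; rewrite nth_iota //; by rewrite size_iota in Hx.
    have Hx' : x = B v by apply/eqP; rewrite eqn_leq find_iota_le; rewrite size_iota in Hx.
    by rewrite Hx' HB.
  by move/eqP=> <-; apply: Hf; rewrite /= Hv.
move=> m Hm; exists (H (m :: v)); split; last by apply: Hf; rewrite /= Hv.
have Hm' : m < size (iota 0 (B v)) by rewrite size_iota; apply: leq_trans Hm (find_iota_le _ _).
have := before_find 0 Hm; rewrite nth_iota; last by rewrite size_iota in Hm'.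
by rewrite add0n lt0n => ->.
Qed.

Ltac cmpn := fail.
Ltac cmpt := repeat first [ cmpn | apply: cmp_proj; done | apply: cmp_zero | apply: cmp_succ
  | apply: cmp_comp1 | apply: cmp_comp2 | apply: cmp_comp3 | apply: cmp_prec ].

Definition P0 := PProj 0. Definition P1 := PProj 1. Definition P2 := PProj 2.
Definition P3 := PProj 3. Definition P4 := PProj 4.
Definition SC g := PComp PSucc [:: g].

Definition ADD := PPrec P0 (SC P1).
Lemma ADD_ok : cmp 2 ADD (fun v => nth 0 v 0 + nth 0 v 1).
Proof.
eapply cmp_ext; first by cmpt.
by move=> [|x [|y []]] //= _; elim: x => //= x ->.
Qed.

Ltac cmpn ::= apply: ADD_ok.
Definition MUL := PPrec PZero (PComp ADD [:: P1; P2]).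
Lemma MUL_ok : cmp 2 MUL (fun v => nth 0 v 0 * nth 0 v 1).
Proof.
eapply cmp_ext; first by cmpt.
move=> [|x [|y []]] //= _; elim: x => //= x ->; by rewrite mulSn addnC.
Qed.

Definition PRED := PPrec PZero P0.
Lemma PRED_ok : cmp 1 PRED (fun v => (nth 0 v 0).-1).
Proof.
eapply cmp_ext; first by cmpt.
by move=> [|x []] //= _; case: x.
Qed.

Ltac cmpn ::= first [apply: ADD_ok | apply: MUL_ok | apply: PRED_ok].
Definition SUBr := PPrec P0 (PComp PRED [:: P1]).
Definition SUB := PComp SUBr [:: P1; P0].
Lemma SUB_ok : cmp 2 SUB (fun v => nth 0 v 0 - nth 0 v 1).
Proof.
eapply cmp_ext; first by cmpt.
move=> [|x [|y []]] //= _; elim: y => //= [|y ->]; by rewrite ?subn0 ?subnS.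
Qed.

Ltac cmpn ::= first [apply: ADD_ok | apply: MUL_ok | apply: PRED_ok | apply: SUB_ok].
Definition absd a b := (a - b) + (b - a).
Definition ABSD := PComp ADD [:: PComp SUB [:: P0; P1]; PComp SUB [:: P1; P0]].
Lemma ABSD_ok : cmp 2 ABSD (fun v => absd (nth 0 v 0) (nth 0 v 1)).
Proof.
eapply cmp_ext; first by cmpt.
by move=> [|x [|y []]].
Qed.

Ltac cmpn ::= first [apply: ADD_ok | apply: MUL_ok | apply: PRED_ok | apply: SUB_ok | apply: ABSD_ok].
Fixpoint tri s := if s is s'.+1 then tri s' + s'.+1 else 0.
Definition TRI := PPrec PZero (PComp ADD [:: P1; SC P0]).
Lemma TRI_ok : cmp 1 TRI (fun v => tri (nth 0 v 0)).
Proof.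
eapply cmp_ext; first by cmpt.
by move=> [|x []] //= _; elim: x => //= x ->.
Qed.

Lemma tri_div s : tri s = s * s.+1 %/ 2.
Proof.
elim: s => //= s ->.
have -> : s.+1 * s.+2 = s * s.+1 + s.+1 * 2 by rewrite mulnC [s * _]mulnC !mulSn; lia.
by rewrite divnDr ?dvdn_mull // mulnK.
Qed.

Lemma npairE x y : npair x y = tri (x + y) + y.
Proof. by rewrite /npair tri_div. Qed.

Ltac cmpn ::= first [apply: ADD_ok | apply: MUL_ok | apply: PRED_ok | apply: SUB_ok | apply: ABSD_ok | apply: TRI_ok].
Definition NPAIR := PComp ADD [:: PComp TRI [:: PComp ADD [:: P0; P1]]; P1].
Lemma NPAIR_ok : cmp 2 NPAIR (fun v => npair (nth 0 v 0) (nth 0 v 1)).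
Proof.
eapply cmp_ext; first by cmpt.
by move=> [|x [|y []]] //= _; rewrite npairE.
Qed.

Ltac cmpn ::= first [apply: ADD_ok | apply: MUL_ok | apply: PRED_ok | apply: SUB_ok | apply: ABSD_ok | apply: TRI_ok | apply: NPAIR_ok].

Lemma tri_ge s : s <= tri s.
Proof. elim: s => //= s IH; lia. Qed.

Lemma tri_mono a b : a <= b -> tri a <= tri b.
Proof.
elim: b => [|b IH] Hab; first by move: Hab; rewrite leqn0 => /eqP ->.
move: Hab; rewrite leq_eqVlt => /orP [/eqP -> //|]; rewrite ltnS => /IH /=; lia.
Qed.

Lemma find_iota_eq (a : pred nat) m B : a m -> (forall i, i < m -> ~~ a i) -> m <= B ->
  find a (iota 0 B) = m.
Proof.
move=> Ham Hlt HmB.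
rewrite -(subnKC HmB) iotaD find_cat.
have -> : has a (iota 0 m) = false.
  by apply/negbTE/hasPn => i; rewrite mem_iota add0n => /andP [_ /Hlt].
rewrite size_iota add0n.
case E: (B - m) => [|b] /=; first by rewrite addn0.
by rewrite Ham addn0.
Qed.

Definition us w := find (fun s => w.+1 - tri s.+1 == 0) (iota 0 w).
Definition US := PMu (PComp SUB [:: SC P1; PComp TRI [:: SC P0]]).
Lemma US_ok : cmp 1 US (fun v => us (nth 0 v 0)).
Proof.
eapply cmp_ext.
  apply: (@cmp_mu 1 _ (fun v => (nth 0 v 1).+1 - tri (nth 0 v 0).+1) (fun v => nth 0 v 0)).
    eapply cmp_ext; first by cmpt.
    by move=> [|x [|y []]].
  move=> [|w []] //= _; have := tri_ge w.+1; lia.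
by move=> [|w []].
Qed.

Definition usnd w := w - tri (us w).
Definition ufst w := us w - usnd w.
Definition USND := PComp SUB [:: P0; PComp TRI [:: PComp US [:: P0]]].
Definition UFST := PComp SUB [:: PComp US [:: P0]; PComp USND [:: P0]].
Ltac cmpn ::= first [apply: ADD_ok | apply: MUL_ok | apply: PRED_ok | apply: SUB_ok | apply: ABSD_ok | apply: TRI_ok | apply: NPAIR_ok | apply: US_ok].
Lemma USND_ok : cmp 1 USND (fun v => usnd (nth 0 v 0)).
Proof. eapply cmp_ext; first by cmpt. by move=> [|w []]. Qed.
Ltac cmpn ::= first [apply: ADD_ok | apply: MUL_ok | apply: PRED_ok | apply: SUB_ok | apply: ABSD_ok | apply: TRI_ok | apply: NPAIR_ok | apply: US_ok | apply: USND_ok].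
Lemma UFST_ok : cmp 1 UFST (fun v => ufst (nth 0 v 0)).
Proof. eapply cmp_ext; first by cmpt. by move=> [|w []]. Qed.

Lemma us_npair x y : us (npair x y) = x + y.
Proof.
rewrite /us npairE; apply: find_iota_eq.
- rewrite /= subn_eq0; lia.
- move=> i Hi; rewrite subn_eq0 -ltnNge ltnS.
  have := tri_mono Hi; lia.
- have := tri_ge (x + y); lia.
Qed.

Lemma usnd_npair x y : usnd (npair x y) = y.
Proof. by rewrite /usnd us_npair npairE; lia. Qed.
Lemma ufst_npair x y : ufst (npair x y) = x.
Proof. by rewrite /ufst us_npair usnd_npair; lia. Qed.

Lemma npair_inj x y x' y' : npair x y = npair x' y' -> x = x' /\ y = y'.
Proof.
move=> E; split; first by rewrite -(ufst_npair x y) E ufst_npair.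
by rewrite -(usnd_npair x y) E usnd_npair.
Qed.

Lemma code_seq_inj : injective code_seq.
Proof.
elim=> [|x s IH] [|x' s'] //= [E].
by case: (npair_inj E) => -> /IH ->.
Qed.

Definition tailc z := usnd z.-1.
Definition headc z := ufst z.-1.
Definition TAIL := PComp USND [:: PComp PRED [:: P0]].
Definition HEAD := PComp UFST [:: PComp PRED [:: P0]].
Ltac cmpn ::= first [apply: ADD_ok | apply: MUL_ok | apply: PRED_ok | apply: SUB_ok | apply: ABSD_ok | apply: TRI_ok | apply: NPAIR_ok | apply: US_ok | apply: USND_ok | apply: UFST_ok].
Lemma TAIL_ok : cmp 1 TAIL (fun v => tailc (nth 0 v 0)).
Proof. eapply cmp_ext; first by cmpt. by move=> [|w []]. Qed.
Lemma HEAD_ok : cmp 1 HEAD (fun v => headc (nth 0 v 0)).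
Proof. eapply cmp_ext; first by cmpt. by move=> [|w []]. Qed.
Ltac cmpn ::= first [apply: ADD_ok | apply: MUL_ok | apply: PRED_ok | apply: SUB_ok | apply: ABSD_ok | apply: TRI_ok | apply: NPAIR_ok | apply: US_ok | apply: USND_ok | apply: UFST_ok | apply: TAIL_ok | apply: HEAD_ok].

Definition ITAIL := PPrec P0 (PComp TAIL [:: P1]).
Lemma ITAIL_ok : cmp 2 ITAIL (fun v => iter (nth 0 v 0) tailc (nth 0 v 1)).
Proof. eapply cmp_ext; first by cmpt. by move=> [|i [|z []]] //= _; elim: i => //= i ->. Qed.
Ltac cmpn ::= first [apply: ADD_ok | apply: MUL_ok | apply: PRED_ok | apply: SUB_ok | apply: ABSD_ok | apply: TRI_ok | apply: NPAIR_ok | apply: US_ok | apply: USND_ok | apply: UFST_ok | apply: TAIL_ok | apply: HEAD_ok | apply: ITAIL_ok].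

Definition nthc z i := headc (iter i tailc z).
Definition NTHC := PComp HEAD [:: PComp ITAIL [:: P1; P0]].
Lemma NTHC_ok : cmp 2 NTHC (fun v => nthc (nth 0 v 0) (nth 0 v 1)).
Proof. eapply cmp_ext; first by cmpt. by move=> [|i [|z []]]. Qed.

Lemma tailc_le z : tailc z <= z.-1.
Proof. by rewrite /tailc /usnd leq_subr. Qed.

Lemma iter_tailc_le i z : iter i tailc z <= z - i.
Proof.
elim: i => [|i IH] /=; first by rewrite subn0.
have := tailc_le (iter i tailc z); lia.
Qed.

Definition lenc z := find (fun i => iter i tailc z == 0) (iota 0 z).
Definition LENC := PMu ITAIL.
Lemma LENC_ok : cmp 1 LENC (fun v => lenc (nth 0 v 0)).
Proof.
eapply cmp_ext.
  apply: (@cmp_mu 1 _ (fun v => iter (nth 0 v 0) tailc (nth 0 v 1)) (fun v => nth 0 v 0)).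
    exact: ITAIL_ok.
  move=> [|z []] //= _; have := iter_tailc_le z z; rewrite subnn; lia.
by move=> [|w []].
Qed.

Definition div3 n := find (fun k => n.+1 - (k.+1 + (k.+1 + k.+1)) == 0) (iota 0 n).
Definition DIV3 := PMu (PComp SUB [:: SC P1; PComp ADD [:: SC P0; PComp ADD [:: SC P0; SC P0]]]).
Lemma DIV3_ok : cmp 1 DIV3 (fun v => div3 (nth 0 v 0)).
Proof.
eapply cmp_ext.
  apply: (@cmp_mu 1 _ (fun v => (nth 0 v 1).+1 - ((nth 0 v 0).+1 + ((nth 0 v 0).+1 + (nth 0 v 0).+1))) (fun v => nth 0 v 0)).
    eapply cmp_ext; first by cmpt.
    by move=> [|x [|y []]].
  move=> [|w []] //= _; lia.
by move=> [|w []].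
Qed.
Ltac cmpn ::= first [apply: ADD_ok | apply: MUL_ok | apply: PRED_ok | apply: SUB_ok | apply: ABSD_ok | apply: TRI_ok | apply: NPAIR_ok | apply: US_ok | apply: USND_ok | apply: UFST_ok | apply: TAIL_ok | apply: HEAD_ok | apply: ITAIL_ok | apply: NTHC_ok | apply: LENC_ok | apply: DIV3_ok].

Definition sigf r k z := find (fun i => absd (nthc z (k + k + i)) (k + (k - r.+1)).+1 * (k - i) == 0) (iota 0 k).
Definition SIGH := PComp MUL [:: PComp ABSD [:: PComp NTHC [:: P4; PComp ADD [:: PComp ADD [:: P3; P3]; P0]];
   SC (PComp ADD [:: P3; PComp SUB [:: P3; SC P1]])]; PComp SUB [:: P3; P0]].
Definition SIG := PMu SIGH.
Lemma SIG_ok : cmp 4 SIG (fun v => sigf (nth 0 v 0) (nth 0 v 2) (nth 0 v 3)).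
Proof.
eapply cmp_ext.
  apply: (@cmp_mu 4 _ (fun v => absd (nthc (nth 0 v 4) (nth 0 v 3 + nth 0 v 3 + nth 0 v 0))
     (nth 0 v 3 + (nth 0 v 3 - (nth 0 v 1).+1)).+1 * (nth 0 v 3 - nth 0 v 0)) (fun v => nth 0 v 2)).
    eapply cmp_ext; first by cmpt.
    by move=> [|i [|r [|a [|k [|z []]]]]].
  by move=> [|r [|a [|k [|z []]]]] //= _; rewrite subnn muln0.
by move=> [|r [|a [|k [|z []]]]].
Qed.
Ltac cmpn ::= first [apply: ADD_ok | apply: MUL_ok | apply: PRED_ok | apply: SUB_ok | apply: ABSD_ok | apply: TRI_ok | apply: NPAIR_ok | apply: US_ok | apply: USND_ok | apply: UFST_ok | apply: TAIL_ok | apply: HEAD_ok | apply: ITAIL_ok | apply: NTHC_ok | apply: LENC_ok | apply: DIV3_ok | apply: SIG_ok].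

Definition stepf r acc k z := (npair (k + k + sigf r k z).+1 acc).+1.
Definition STEP := SC (PComp NPAIR [:: SC (PComp ADD [:: PComp ADD [:: P2; P2]; SIG]); P1]).
Lemma STEP_ok : cmp 4 STEP (fun v => stepf (nth 0 v 0) (nth 0 v 1) (nth 0 v 2) (nth 0 v 3)).
Proof. eapply cmp_ext; first by cmpt. by move=> [|r [|a [|k [|z []]]]]. Qed.

Ltac cmpn ::= first [apply: ADD_ok | apply: MUL_ok | apply: PRED_ok | apply: SUB_ok | apply: ABSD_ok | apply: TRI_ok | apply: NPAIR_ok | apply: US_ok | apply: USND_ok | apply: UFST_ok | apply: TAIL_ok | apply: HEAD_ok | apply: ITAIL_ok | apply: NTHC_ok | apply: LENC_ok | apply: DIV3_ok | apply: SIG_ok | apply: STEP_ok].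
Fixpoint buildf r k z := if r is r'.+1 then stepf r' (buildf r' k z) k z else 0.
Definition BUILD := PPrec PZero STEP.
Lemma BUILD_ok : cmp 3 BUILD (fun v => buildf (nth 0 v 0) (nth 0 v 1) (nth 0 v 2)).
Proof.
eapply cmp_ext; first by cmpt.
by move=> [|r [|k [|z []]]] //= _; elim: r => //= r ->.
Qed.

Ltac cmpn ::= first [apply: ADD_ok | apply: MUL_ok | apply: PRED_ok | apply: SUB_ok | apply: ABSD_ok | apply: TRI_ok | apply: NPAIR_ok | apply: US_ok | apply: USND_ok | apply: UFST_ok | apply: TAIL_ok | apply: HEAD_ok | apply: ITAIL_ok | apply: NTHC_ok | apply: LENC_ok | apply: DIV3_ok | apply: SIG_ok | apply: STEP_ok | apply: BUILD_ok].
Definition decf z := buildf (div3 (lenc z)) (div3 (lenc z)) z.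
Definition DEC := PComp BUILD [:: PComp DIV3 [:: PComp LENC [:: P0]]; PComp DIV3 [:: PComp LENC [:: P0]]; P0].
Lemma DEC_ok : cmp 1 DEC (fun v => decf (nth 0 v 0)).
Proof. eapply cmp_ext; first by cmpt. by move=> [|z []]. Qed.

Lemma tailc_nil : tailc 0 = 0.
Proof. by rewrite /tailc /usnd. Qed.
Lemma headc_nil : headc 0 = 0.
Proof. by rewrite /headc /ufst /usnd /us. Qed.

Lemma tailc_code s : tailc (code_seq s) = code_seq (behead s).
Proof. case: s => [|x s] /=; first exact: tailc_nil. by rewrite /tailc /= usnd_npair. Qed.

Lemma iter_tailc_code i s : iter i tailc (code_seq s) = code_seq (drop i s).
Proof.
elim: i s => [|i IH] s; first by rewrite drop0.
by rewrite iterS IH tailc_code !drop_behead.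
Qed.

Lemma nthc_code s i : nthc (code_seq s) i = nth 0 s i.
Proof.
rewrite /nthc iter_tailc_code.
case: (ltnP i (size s)) => Hi.
  by rewrite (drop_nth 0 Hi) /headc /= ufst_npair.
by rewrite drop_oversize // headc_nil nth_default.
Qed.

Lemma size_le_code s : size s <= code_seq s.
Proof. elim: s => //= x s IH; rewrite npairE; lia. Qed.

Lemma lenc_code s : lenc (code_seq s) = size s.
Proof.
rewrite /lenc; apply: find_iota_eq.
- by rewrite iter_tailc_code drop_size.
- move=> i Hi; rewrite iter_tailc_code (drop_nth 0 Hi) //.
- exact: size_le_code.
Qed.

Lemma div3_3k k : div3 (3 * k) = k.
Proof.
rewrite /div3; apply: find_iota_eq.
- rewrite subn_eq0; lia.
- move=> i Hi; rewrite subn_eq0; lia.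
- lia.
Qed.

Section Dec.
Variables (k : nat) (sg : 'S_k) (s : seq nat).
Hypothesis Hs : size s = 3 * k.
Hypothesis Hval : forall J : 'I_k, nth 0 s (k + k + sg J) = (k + J).+1.

Lemma sigf_ok (J : 'I_k) : sigf (k - J.+1) k (code_seq s) = sg J.
Proof.
have HJ := ltn_ord J.
have Ej : k - (k - J.+1).+1 = J by lia.
rewrite /sigf Ej; apply: find_iota_eq.
- by rewrite nthc_code Hval /absd !subnn.
- move=> i Hi.
  have Hik : i < k by apply: ltn_trans Hi (ltn_ord _).
  pose I := Ordinal Hik.
  pose J' := ((sg^-1)%g I).
  have EJ' : sg J' = I by rewrite /J' permKV.
  have Hne : J' != J.
    apply/eqP => E; move: Hi; rewrite -E EJ' /=; lia.
  rewrite nthc_code; have := Hval J'; rewrite EJ' /= => ->.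
  rewrite muln_eq0 negb_or; apply/andP; split.
    move: Hne; rewrite /absd -val_eqE /=; lia.
  lia.
- exact: ltnW (ltn_ord _).
Qed.

Definition outp := [seq (2 * k + sg j).+1 | j <- enum 'I_k].

Lemma buildf_ok r : r <= k -> buildf r k (code_seq s) = code_seq (drop (k - r) outp).
Proof.
elim: r => [|r IH] Hr /=; first by rewrite subn0 drop_oversize // size_map size_enum_ord.
have Hrk : k - r.+1 < k by lia.
pose J := Ordinal Hrk.
rewrite IH ?(ltnW Hr) // /stepf.
have -> : sigf r k (code_seq s) = sg J by rewrite -sigf_ok /=; congr sigf; lia.
have Hsz : J < size outp by rewrite size_map size_enum_ord.
rewrite (drop_nth 0 Hsz) /=.
have -> : J.+1 = k - r by rewrite /=; lia.
rewrite -[k - r.+1]/(nat_of_ord J) /outp (nth_map J) ?size_enum_ord // nth_ord_enum.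
by rewrite mul2n -addnn.
Qed.

Lemma decf_ok : decf (code_seq s) = enc_perm sg.
Proof.
by rewrite /decf lenc_code Hs div3_3k buildf_ok // subnn drop0.
Qed.
End Dec.

Lemma transfer d : optimal d -> exists cf : nat, forall s y, describes d s y ->
  exists s', describes d s' (decf y) /\ size s' <= size s + cf.
Proof.
move=> Hd; case: (Hd (PComp DEC [:: d])) => c Hc; exists c => s y Hy.
apply: Hc; rewrite /describes.
apply: eComp; first by apply: evCons Hy (evNil _).
exact: DEC_ok.
Qed.

Lemma reach1 n (e : rel 'I_n) u v : reach_in e 1 u v = e u v.
Proof.
apply/existsP/idP => [[w /andP [H /eqP <-]] // | H]; by exists v; rewrite H /=.
Qed.

Lemma force n (e : rel 'I_n) F u m w : routing_scheme e F -> stretch_lt2 e F ->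
  u != w -> e u m -> e m w -> ~~ e u w -> (forall y, e y w -> y = m) ->
  (forall y, e u y -> ~~ e y m) -> F u w = m.
Proof.
move=> HF Hs Huw Hum Hmw Huw' Hw Hu.
case: (Hs _ _ Huw) => l [p [[Hit Hnot] [[Hp Hq] Hr]]].
have R2 : reach_in e 2 u w.
  by apply/existsP; exists m; rewrite Hum /=; apply/existsP; exists w; rewrite Hmw eqxx.
have Hp2 : p <= 2.
  by rewrite leqNgt; apply/negP => /Hq; rewrite R2.
have Hp0 : p != 0.
  by apply/eqP => E; move: Hp; rewrite E /= (negbTE Huw).
have Hp1 : p != 1.
  by apply/eqP => E; move: Hp; rewrite E reach1 (negbTE Huw').
have Ep : p = 2 by lia.
rewrite Ep in Hr.
have Hl : l < 4.
  have : (INR l < 4)%R.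
    have H2 : (INR 2 = 2)%R by simpl; lra.
    rewrite H2 in Hr.
    apply (Rmult_lt_compat_r 2) in Hr; last lra.
    by move: Hr; rewrite /Rdiv Rmult_assoc Rinv_l; lra.
  move=> H; apply/ltP; apply: INR_lt; simpl; lra.
set f := fun x => F x w in Hit Hnot.
have Hx1 : e u (F u w) := HF _ _ Huw.
clear Hr; move: Hit Hnot; case: l Hl => [|[|[|[|l]]]] // _ /= Hit Hnot.
- by move: Huw; rewrite Hit eqxx.
- by move: Huw'; rewrite -Hit Hx1.
- have Hn1 := Hnot 1 isT; rewrite /= in Hn1.
  have : e (f u) (f (f u)) := HF _ _ Hn1.
  rewrite Hit; exact: Hw.
- have Hn1 := Hnot 1 isT; have Hn2 := Hnot 2 isT; rewrite /= in Hn1 Hn2.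
  have : e (f (f u)) (f (f (f u))) := HF _ _ Hn2.
  rewrite Hit => /Hw Em.
  have : e (f u) (f (f u)) by exact: HF _ _ Hn1.
  by rewrite Em; move: (Hu _ Hx1) => /negbTE ->.
Qed.

Section Graph.
Variables (k : nat) (sg : 'S_k) (n : nat).

Definition E1 (x y : 'I_n) := ((x < k) && (k <= y) && (y < 2 * k)) ||
  [exists j : 'I_k, (nat_of_ord x == k + j) && (nat_of_ord y == 2 * k + sg j)] ||
  ((nat_of_ord x == 0) && (3 * k <= y) && (nat_of_ord y != 0)).
Definition HG : rel 'I_n := fun x y => E1 x y || E1 y x.

Lemma E1P (x y : 'I_n) : reflect ((x < k /\ k <= y /\ y < 2 * k) \/
   (exists j : 'I_k, nat_of_ord x = k + j /\ nat_of_ord y = 2 * k + sg j) \/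
   (nat_of_ord x = 0 /\ 3 * k <= y /\ nat_of_ord y <> 0)) (E1 x y).
Proof.
apply: (iffP idP).
  rewrite /E1 => /orP [/orP [/andP [/andP [a b] c]|/existsP [j /andP [/eqP a /eqP b]]]|/andP [/andP [/eqP a b] /eqP c]].
  - by left.
  - by right; left; exists j.
  - by right; right.
move=> [[a [b c]]|[[j [Ex Ey]]|[Ex [Ey Ez]]]]; rewrite /E1.
- by rewrite a b c.
- by apply/orP; left; apply/orP; right; apply/existsP; exists j; rewrite Ex Ey !eqxx.
- by rewrite Ex Ey eqxx; apply/orP; right; apply/eqP.
Qed.

Lemma HG_facts (u m w : 'I_n) (J : 'I_k) : nat_of_ord u < k -> nat_of_ord m = k + J -> nat_of_ord w = 2 * k + sg J ->
  u != w /\ HG u m /\ HG m w /\ ~~ HG u w /\ (forall y, HG y w -> y = m) /\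
      (forall y, HG u y -> ~~ HG y m).
Proof.
move=> Hu Hm Hw.
have HJ := ltn_ord J; have HsJ := ltn_ord (sg J).
have Hn : forall j : 'I_k, j < k /\ sg j < k by move=> j; split; apply: ltn_ord.
split; [|split; [|split; [|split; [|split]]]].
- apply/eqP => E; move: Hw; rewrite -E; lia.
- apply/orP; left; apply/E1P; left; lia.
- apply/orP; left; apply/E1P; right; left; exists J; lia.
- apply/negP => /orP [] /E1P [|[[j [E1 E2]]|]]; try lia; have := Hn j; lia.
- move=> y /orP [] /E1P [|[[j [E1 E2]]|]]; try lia; try (have := Hn j; lia).
  have Ej : sg j = sg J by apply: ord_inj; lia.
  move/perm_inj: Ej => Ej; subst j; apply: ord_inj; lia.
- move=> y Hy; apply/negP => Hz.
  case/orP: Hy => /E1P [Hy|[[j [E1 E2]]|Hy]]; case/orP: Hz => /E1P [Hz|[[j' [E3 E4]]|Hz]];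
  try lia; try (have := Hn j; lia); try (have := Hn j'; lia); (have := Hn j; have := Hn j'; lia).
Qed.
End Graph.

Definition tbl n (F : 'I_n -> 'I_n -> 'I_n) (u : 'I_n) :=
  [seq (if v == u then 0 else (F u v).+1) | v <- enum 'I_n].

Lemma enc_localE n F (u : 'I_n) : enc_local F u = code_seq (tbl F u).
Proof. by []. Qed.

Lemma HG_table k (sg : 'S_k) n (e : rel 'I_n) F (u : 'I_n) : 3 * k <= n -> e =2 @HG k sg n ->
  routing_scheme e F -> stretch_lt2 e F -> nat_of_ord u < k ->
  forall J : 'I_k, nth 0 (tbl F u) (k + k + sg J) = (k + J).+1.
Proof.
move=> Hn He HF Hs Hu J.
have HJ := ltn_ord J; have HsJ := ltn_ord (sg J).
have Hm : k + J < n by lia.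
have Hw : k + k + sg J < n by lia.
pose m := Ordinal Hm; pose w := Ordinal Hw.
have [Huw [Hum [Hmw [Huw' [Hyw Huy]]]]] := @HG_facts k sg n u m w J Hu erefl ltac:(rewrite /=; lia).
rewrite /tbl (nth_map u) ?size_enum_ord //.
have -> : nth u (enum 'I_n) (k + k + sg J) = w by apply: ord_inj; rewrite nth_enum_ord.
rewrite eq_sym (negbTE Huw).
have -> : F u w = m; last by [].
apply: (force HF Hs Huw); rewrite ?He //.
- by move=> y; rewrite He; apply: Hyw.
- by move=> y; rewrite !He; apply: Huy.
Qed.

Lemma Gk_HG k (sg : 'S_k) : Gk sg =2 @HG k sg (3 * k).
Proof.
move=> x y; rewrite /Gk /HG /E1 /Gk_edge0.
have Hx := ltn_ord x; have Hy := ltn_ord y.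
have -> : (3 * k <= y) = false by apply/negbTE; rewrite -ltnNge.
have -> : (3 * k <= x) = false by apply/negbTE; rewrite -ltnNge.
by rewrite !andbF !orbF.
Qed.

Section RealFacts.
Local Open Scope R_scope.

Lemma INRmul (a b : nat) : INR (a * b)%nat = INR a * INR b.
Proof. exact: mult_INR. Qed.
Lemma INRadd (a b : nat) : INR (a + b)%nat = INR a + INR b.
Proof. exact: plus_INR. Qed.
Lemma INRsub (a b : nat) : (b <= a)%nat -> INR (a - b)%nat = INR a - INR b.
Proof. move=> H; rewrite -[in INR a](subnK H) INRadd; ring. Qed.
Lemma INRle a b : (a <= b)%nat -> INR a <= INR b.
Proof. by move/leP; apply: le_INR. Qed.
Lemma INRexp (a b : nat) : INR (expn a b) = INR a ^ b.
Proof. elim: b => [|b IH]; first by rewrite expn0. by rewrite expnS INRmul IH. Qed.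
Lemma INRlt a b : (a < b)%nat -> INR a < INR b.
Proof. by move/ltP; apply: lt_INR. Qed.
Lemma INRge0 (a : nat) : 0 <= INR a.
Proof. exact: pos_INR. Qed.

Lemma ln0 : ln 0 = 0.
Proof. rewrite /ln; case: (Rlt_dec 0 0) => [H|//]. exfalso; exact: (Rlt_irrefl _ H). Qed.

Lemma ln2_pos : 0 < ln 2.
Proof. have := ln_lt_2; lra. Qed.

Lemma log2_mult x y : 0 < x -> 0 < y -> log2 (x * y) = log2 x + log2 y.
Proof. move=> Hx Hy; rewrite /log2 ln_mult //; field; have := ln2_pos; lra. Qed.

Lemma log2_pow2 t : log2 (2 ^ t) = INR t.
Proof. rewrite /log2 ln_pow; last lra. field; have := ln2_pos; lra. Qed.

Lemma log2_lt x y : 0 < x -> x < y -> log2 x < log2 y.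
Proof.
move=> Hx Hxy; rewrite /log2; apply: Rmult_lt_compat_r.
  by apply: Rinv_0_lt_compat; apply: ln2_pos.
exact: ln_increasing.
Qed.

Lemma log2_le x y : 0 < x -> x <= y -> log2 x <= log2 y.
Proof. move=> Hx [H|->]; [by apply: Rlt_le; apply: log2_lt | lra]. Qed.

Lemma log2_1 : log2 1 = 0.
Proof. by rewrite /log2 ln_1 /Rdiv Rmult_0_l. Qed.

Lemma log2_nonneg x : 1 <= x -> 0 <= log2 x.
Proof. move=> H; rewrite -log2_1; apply: log2_le; lra. Qed.

Lemma log2_3 : log2 3 < 2.
Proof.
have -> : 2 = log2 (2 ^ 2) by rewrite log2_pow2 /=; lra.
apply: log2_lt; lra.
Qed.

Lemma log2_5 : log2 5 < 3.
Proof.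
have -> : 3 = log2 (2 ^ 3) by rewrite log2_pow2 /=; lra.
apply: log2_lt; lra.
Qed.

Lemma log2_le_n n : log2 (INR n) <= INR n.
Proof.
case: n => [|n].
  rewrite /log2 /=.
  have -> : ln 0 = 0.
    rewrite /ln; case: (Rlt_dec 0 0) => [H|//]; exfalso; exact: (Rlt_irrefl _ H).
  rewrite /Rdiv Rmult_0_l; lra.
rewrite -[X in _ <= X]log2_pow2; apply: log2_le.
  by apply: lt_0_INR; apply/ltP.
rewrite -[2]/(INR 2) -INRexp; apply: INRle.
exact: (ltnW (@ltn_expl 2 n.+1 isT)).
Qed.

Lemma inv_ln2_lt2 : / ln 2 < 2.
Proof.
have H := ln_lt_2.
have H2 := ln2_pos.
apply (Rmult_lt_reg_l (ln 2)) => //.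
rewrite Rinv_r; lra.
Qed.

Lemma ln_1px x : 0 < x -> ln (1 + x) < x.
Proof.
move=> Hx; rewrite -{2}(ln_exp x); apply: ln_increasing; first lra.
apply: exp_ineq1; lra.
Qed.

Lemma ln_fact k : INR k * ln (INR k) - INR k <= ln (INR (k`!)).
Proof.
elim: k => [|k IH].
  by rewrite /= Rmult_0_l ln_1; lra.
rewrite factS INRmul ln_mult; last first.
- by apply: lt_0_INR; apply/ltP; apply: fact_gt0.
- by apply: lt_0_INR; apply/ltP.
suff: INR k * (ln (INR k.+1) - ln (INR k)) <= 1.
  rewrite S_INR; move=> H; nra.
case: k IH => [|k] IH.
  by rewrite /= Rmult_0_l; lra.
have Hk : 0 < INR k.+1 by apply: lt_0_INR; apply/ltP.
have E : INR k.+2 = INR k.+1 * (1 + / INR k.+1).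
  by rewrite (S_INR k.+1); field; lra.
rewrite E ln_mult; last first.
- have := Rinv_0_lt_compat _ Hk; lra.
- done.
have := ln_1px (Rinv_0_lt_compat _ Hk).
set L := ln (1 + / INR k.+1) => HL.
have : INR k.+1 * L <= INR k.+1 * / INR k.+1 by apply: Rmult_le_compat_l; lra.
rewrite Rinv_r; last lra.
move=> H; lra.
Qed.

Lemma log2_fact k : INR k * log2 (INR k) - 2 * INR k <= log2 (INR (k`!)).
Proof.
have H := ln_fact k.
have Hl := ln2_pos. have Hi := inv_ln2_lt2.
have Hk := INRge0 k.
rewrite /log2 /Rdiv.
have Hinv : 0 < / ln 2 by apply: Rinv_0_lt_compat.
have : (INR k * ln (INR k) - INR k) * / ln 2 <= ln (INR k`!) * / ln 2.
  by apply: Rmult_le_compat_r; lra.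
have : INR k * / ln 2 <= INR k * 2 by apply: Rmult_le_compat_l; lra.
nra.
Qed.
End RealFacts.

Lemma foldl_bits_lt (s : seq bool) a :
  (foldl (fun a (b : bool) => a.*2 + b) a s).+1 <= a.+1 * expn 2 (size s).
Proof.
elim: s a => [|b s IH] a /=; first by rewrite expn0 muln1.
apply: leq_trans (IH _) _; rewrite expnS mulnA leq_mul2r; case: b => /=; lia.
Qed.

Lemma nat_of_bits_lt s B : size s < B -> nat_of_bits s < expn 2 B - 1.
Proof.
move=> Hs; rewrite /nat_of_bits.
have H := foldl_bits_lt s 1.
have H2 : expn 2 (size s).+1 <= expn 2 B by rewrite leq_exp2l.
have Hp : 0 < foldl (fun a (b : bool) => a.*2 + b) 1 s.
  have: forall (t : seq bool) a, 0 < a -> 0 < foldl (fun a (b : bool) => a.*2 + b) a t.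
    by elim=> //= b t IH a Ha; apply: IH; case: b => /=; lia.
  by apply.
rewrite expnS in H2; lia.
Qed.

Lemma count_good (T : finType) (P : T -> nat -> Prop) B :
  (forall x y N, P x N -> P y N -> x = y) ->
  exists A : {set T}, #|T| <= #|A| + (expn 2 B - 1) /\
    forall x, x \in A -> forall s, P x (nat_of_bits s) -> B <= size s.
Proof.
move=> Hinj.
pose bad x := exists N, N < expn 2 B - 1 /\ P x N.
pose A := [set x | if excluded_middle_informative (bad x) then false else true].
exists A; split.
  pose f x := match excluded_middle_informative (bad x) with
              | left H => proj1_sig (constructive_indefinite_description _ H) | right _ => 0 end.
  have Hf : forall x, x \notin A -> f x < expn 2 B - 1 /\ P x (f x).
    move=> x; rewrite /A inE /f; case: excluded_middle_informative => // H _.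
    by case: (constructive_indefinite_description _ H).
  rewrite -(cardC A) leq_add2l cardE.
  rewrite -(size_map f) -(size_iota 0 (expn 2 B - 1)).
  apply: uniq_leq_size.
    rewrite map_inj_in_uniq ?enum_uniq // => x y; rewrite !mem_enum => Hx Hy E.
    have [_ Px] := Hf x Hx; have [_ Py] := Hf y Hy.
    by apply: Hinj Px _; rewrite E.
  move=> z /mapP [x]; rewrite mem_enum => Hx ->; rewrite mem_iota add0n.
  by case: (Hf x Hx).
move=> x; rewrite inE; case: excluded_middle_informative => // Hb _ s Hs.
rewrite leqNgt; apply/negP => Hlt; apply: Hb; exists (nat_of_bits s); split => //.
exact: nat_of_bits_lt.
Qed.

Lemma part2 d (Hd : optimal d) : forall c0 : R, exists c : R, forall (k : nat) (sigma : 'S_k),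
     KC_ge d (enc_perm sigma) (INR k * log2 (INR k) - c0 * INR k)%R ->
     Gk_good d c sigma.
Proof.
case: (transfer Hd) => cf Hcf c0.
exists ((Rabs c0 + INR cf + 2) / 3)%R => k sg Hkc F HF Hs u Hu s Hdesc.
have Htab := @HG_table k sg (3 * k) (Gk sg) F u (leqnn _) (@Gk_HG k sg) HF Hs Hu.
have Hsz : size (tbl F u) = 3 * k by rewrite size_map size_enum_ord.
have Hdec := decf_ok Hsz Htab.
case: (Hcf _ _ Hdesc) => s' [Hs' Hsize].
rewrite enc_localE Hdec in Hs'.
have H1 := Hkc _ Hs'.
have H2 : (INR (size s') <= INR (size s) + INR cf)%R.
  by rewrite -INRadd; exact: (INRle Hsize).
have Hk : (1 <= INR k)%R by rewrite -[1%R]/(INR 1); apply: INRle; lia.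
have E3 : INR (3 * k) = (3 * INR k)%R by rewrite INRmul; congr (_ * _)%R; simpl; lra.
rewrite E3 log2_mult; [|lra|lra].
have Hl3 := log2_3.
have Hcf0 := INRge0 cf.
have Ha := Rle_abs c0.
set K := INR k in Hk H1 E3 *; set L := log2 K in H1 *.
have P1 : (K * log2 3 <= K * 2)%R by apply: Rmult_le_compat_l; lra.
have P2 : (c0 * K <= Rabs c0 * K)%R by apply: Rmult_le_compat_r; lra.
have P3 : (INR cf <= INR cf * K)%R by rewrite -{1}(Rmult_1_r (INR cf)); apply: Rmult_le_compat_l; lra.
have -> : ((3 * K / 3 * (log2 3 + L) - (Rabs c0 + INR cf + 2) / 3 * (3 * K)) =
   K * L + K * log2 3 - Rabs c0 * K - INR cf * K - 2 * K)%R by field.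
lra.
Qed.

Lemma enc_perm_inj k : injective (@enc_perm k).
Proof.
move=> s1 s2 /code_seq_inj /eq_in_map E; apply/permP => J.
have := E J; rewrite mem_enum => /(_ isT) [] H.
by apply: ord_inj; lia.
Qed.

Lemma log2_fact_lt k : (log2 (INR k`!) < INR (trunc_log 2 k`!) + 1)%R.
Proof.
have Hf := fact_gt0 k.
have /andP [_ H] := trunc_log_bounds (isT : 1 < 2) Hf.
have -> : (INR (trunc_log 2 k`!) + 1 = log2 (2 ^ (trunc_log 2 k`!).+1))%R.
  by rewrite log2_pow2 S_INR.
apply: log2_lt; first by apply: lt_0_INR; apply/ltP.
rewrite -[2%R]/(INR 2) -INRexp; exact: INRlt.
Qed.

Lemma part3 d (Hd : optimal d) : exists c : R, forall k : nat, exists A : {set 'S_k},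
     ((1 - (1/2) ^ k) * INR (k`!) <= INR #|A|)%R /\
     forall sigma, sigma \in A -> Gk_good d c sigma.
Proof.
have [c Hc] := part2 Hd 4%R.
exists c => k.
pose t := trunc_log 2 k`!.
pose B := t - k.
have Hinj : forall (x y : 'S_k) N, eval d [:: N] (enc_perm x) -> eval d [:: N] (enc_perm y) -> x = y.
  by move=> x y N Hx Hy; apply: enc_perm_inj; apply: eval_det Hx Hy.
have [A [HA HAg]] := count_good B Hinj.
exists A; split.
  rewrite card_Sn in HA.
  have Hf := fact_gt0 k.
  have HP : (0 < 2 ^ k)%R by apply: pow_lt; lra.
  have Eh : ((1/2) ^ k = / 2 ^ k)%R by rewrite -pow_inv; congr (_ ^ _)%R; field.
  case: (leqP k t) => Hkt.
    have HQ : expn 2 B * expn 2 k <= k`!.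
      by rewrite -expnD subnK // trunc_logP.
    have HA' : (INR (k`!) <= INR #|A| + INR (expn 2 B))%R.
      rewrite -INRadd; apply: INRle; lia.
    have HQ' : (INR (expn 2 B) * 2 ^ k <= INR (k`!))%R.
      by rewrite -[2%R]/(INR 2) -INRexp -INRmul; apply: INRle.
    rewrite Eh.
    set F := INR (k`!) in HA' HQ' *; set Q := INR (expn 2 B) in HA' HQ'; set P := (2 ^ k)%R in HP HQ' *.
    have : (F * / P >= Q)%R.
      apply: Rle_ge; apply: (Rmult_le_reg_r P) => //.
      by rewrite Rmult_assoc Rinv_l; lra.
    move=> H; have -> : ((1 - / P) * F = F - F * / P)%R by ring.
    move: H; set X := (F * / P)%R => H. set a := INR #|A| in HA' *; clearbody F Q P X a; lra.
  have EB : B = 0 by rewrite /B; lia.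
  have HA' : (INR (k`!) <= INR #|A|)%R by apply: INRle; move: HA; rewrite EB expn0 subnn addn0.
  have Hh : (0 <= (1/2) ^ k)%R by apply: pow_le; lra.
  have HF := INRge0 (k`!).
  have := Rmult_le_pos _ _ Hh HF.
  set a := INR #|A| in HA' *; set h := ((1/2) ^ k)%R in Hh *; set F := INR k`! in HA' HF *.
  move=> H; have -> : ((1 - h) * F = F - h * F)%R by ring.
  clearbody a h F; lra.
move=> sg Hsg; apply: Hc => s Hs.
have HB := HAg _ Hsg _ Hs.
have HBs : (INR B <= INR (size s))%R by exact: INRle.
suff: (INR k * log2 (INR k) - 4 * INR k <= INR B)%R by lra.
have H1 := log2_fact k.
have H2 := log2_fact_lt k.
rewrite -/t in H2.
have HK := INRge0 k.
case: (leqP k t) => Hkt.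
  rewrite /B INRsub //.
  case: (posnP k) => Hk0.
    rewrite Hk0 /= Rmult_0_l; have := INRge0 t; lra.
  have : (1 <= INR k)%R by rewrite -[1%R]/(INR 1); apply: INRle.
  set K := INR k in H1 H2 HK *; set L := log2 K in H1 *.
  clearbody K L; lra.
have EB : B = 0 by rewrite /B; lia.
rewrite EB /=.
have Ht : (INR t + 1 <= INR k)%R by rewrite -S_INR; apply: INRle.
set K := INR k in H1 Ht HK *; set L := log2 K in H1 *.
have : (K * L < 3 * K)%R by lra.
lra.
Qed.

Lemma reach_cat n (e : rel 'I_n) p q u w v : reach_in e p u w -> reach_in e q w v ->
  reach_in e (p + q) u v.
Proof.
elim: p u => [|p IH] u /=; first by move/eqP ->.
move=> /existsP [w' /andP [H1 H2]] H3; apply/existsP; exists w'.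
by rewrite H1 (IH _ H2 H3).
Qed.

Lemma reach_sym n (e : rel 'I_n) : (forall x y, e x y = e y x) ->
  forall p u v, reach_in e p u v -> reach_in e p v u.
Proof.
move=> Hs; elim=> [|p IH] u v; first by rewrite /= eq_sym.
move=> H; case/existsP: H => w /andP [H1 H2].
rewrite -addn1; apply: reach_cat (IH _ _ H2) _.
by rewrite reach1 Hs.
Qed.

Lemma HG_sym k (sg : 'S_k) n (x y : 'I_n) : HG sg x y = HG sg y x.
Proof. by rewrite /HG orbC. Qed.

Lemma HG_irr k (sg : 'S_k) n (x : 'I_n) : ~~ HG sg x x.
Proof.
rewrite /HG orbb; apply/negP => /E1P [|[[j [E1 E2]]|]]; try lia.
have := ltn_ord j; lia.
Qed.

Lemma HG_conn k (sg : 'S_k) n : 3 * k <= n -> connected (@HG k sg n).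
Proof.
move=> Hn u v.
have Hn0 : 0 < n by have := ltn_ord u; lia.
pose z0 := Ordinal Hn0.
have Hz : forall x : 'I_n, exists p, reach_in (@HG k sg n) p x z0.
  move=> x.
  have Hx := ltn_ord x.
  case: (posnP (nat_of_ord x)) => Hx0.
    by exists 0 => /=; apply/eqP; apply: ord_inj.
  case: (ltnP x k) => Hxk.
    have Hm : k < n by lia.
    pose m := Ordinal Hm.
    exists 2; rewrite -[2]/(1 + 1); apply: (@reach_cat _ _ 1 1 _ m).
      rewrite reach1; apply/orP; left; apply/E1P; left; rewrite /=; lia.
    rewrite reach1; apply/orP; right; apply/E1P; left; rewrite /=; lia.
  case: (ltnP x (2 * k)) => Hx2.
    exists 1; rewrite reach1; apply/orP; right; apply/E1P; left; rewrite /=; lia.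
  case: (ltnP x (3 * k)) => Hx3.
    have Hi : x - 2 * k < k by lia.
    pose J := ((sg^-1)%g (Ordinal Hi)).
    have EJ : sg J = Ordinal Hi by rewrite /J permKV.
    have Hm : k + J < n by have := ltn_ord J; lia.
    pose m := Ordinal Hm.
    exists 2; rewrite -[2]/(1 + 1); apply: (@reach_cat _ _ 1 1 _ m).
      rewrite reach1; apply/orP; right; apply/E1P; right; left; exists J; rewrite EJ /=; lia.
    rewrite reach1; apply/orP; right; apply/E1P; left; have := ltn_ord J; rewrite /=; lia.
  exists 1; rewrite reach1; apply/orP; right; apply/E1P; right; right; rewrite /=; lia.
have [p Hp] := Hz u; have [q Hq] := Hz v.
exists (p + q); apply: reach_cat Hp (reach_sym (@HG_sym k sg n) Hq).
Qed.

Lemma sum_lb n (f : 'I_n -> nat) k (b : R) : k <= n -> (0 <= b)%R ->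
  (forall u : 'I_n, (nat_of_ord u < k)%nat -> (b <= INR (f u))%R) ->
  (INR k * b <= INR (\sum_(u < n) f u))%R.
Proof.
elim: n f k => [|n IH] f k Hk Hb Hf.
  have -> : k = 0 by lia.
  rewrite big_ord0 /= Rmult_0_l; lra.
rewrite big_ord_recr /= INRadd.
case: (leqP k n) => Hkn.
  have := IH (fun i => f (widen_ord (leqnSn n) i)) k Hkn Hb (fun u Hu => Hf (widen_ord (leqnSn n) u) Hu).
  move=> H1; have H2 := INRge0 (f ord_max).
  move: H1 H2; set S := INR (\sum_(i < n) _); set T := INR (f _); move=> H1 H2; lra.
have Ek : k = n.+1 by lia.
have := IH (fun i => f (widen_ord (leqnSn n) i)) n (leqnn n) Hb (fun u Hu => Hf (widen_ord (leqnSn n) u) ltac:(rewrite /=; lia)).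
have := Hf ord_max ltac:(rewrite /=; lia).
rewrite Ek S_INR; set S := INR (\sum_(i < n) _); set T := INR (f _); move=> H1 H2; lra.
Qed.

Lemma part1_real n k t : k = n %/ 3 -> 0 < k -> (log2 (INR k`!) < INR t + 1)%R ->
  (INR n / 3 * log2 (INR n) - 4 * INR n <= INR t)%R.
Proof.
move=> Hk Hk0 Ht.
have Hf := log2_fact k.
have HKn : (3 * INR k <= INR n)%R.
  have -> : (3 * INR k = INR (3 * k))%R by rewrite INRmul /=; ring.
  apply: INRle; lia.
have HnK : (INR n <= 3 * INR k + 2)%R.
  have -> : (3 * INR k + 2 = INR (3 * k + 2))%R by rewrite INRadd INRmul /=; ring.
  apply: INRle; lia.
have HK1 : (1 <= INR k)%R by rewrite -[1%R]/(INR 1); apply: INRle.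
have HLK := log2_le_n k.
have HL0 : (0 <= log2 (INR k))%R by apply: log2_nonneg.
have HN0 : (0 < INR n)%R by lra.
have HlN : (log2 (INR n) <= log2 (INR k) + 3)%R.
  have := log2_5.
  have : (log2 (INR n) <= log2 (5 * INR k))%R by apply: log2_le; lra.
  rewrite log2_mult; lra.
have HlN0 : (0 <= log2 (INR n))%R by apply: log2_nonneg; lra.
have Hprod : (INR n / 3 * log2 (INR n) <= (INR k + 1) * (log2 (INR k) + 3))%R.
  apply: Rmult_le_compat; lra.
have E : ((INR k + 1) * (log2 (INR k) + 3) = INR k * log2 (INR k) + log2 (INR k) + 3 * INR k + 3)%R by ring.
rewrite E in Hprod.
move: Hprod Hf Ht HKn HnK HK1 HLK HL0.
set K := INR k; set L := log2 K; set M := (INR n / 3 * log2 (INR n))%R; set P := (K * L)%R.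
set Q := log2 _; set N := INR n; set T := INR t.
clearbody K L M P Q N T; move=> *; lra.
Qed.

Lemma sum_real (N K Lg Sg : R) : (0 <= N)%R -> (0 <= Lg)%R -> (Lg <= N)%R ->
  ((N - 2) / 3 <= K)%R -> (0 <= Sg)%R ->
  ((0 <= N / 3 * Lg - 4 * N)%R -> (K * (N / 3 * Lg - 4 * N) <= Sg)%R) ->
  (N ^ 2 / 9 * Lg - 4 * N ^ 2 <= Sg)%R.
Proof.
move=> HN HL HLN HK HS Hb.
have HNL : (N * Lg <= N * N)%R by apply: Rmult_le_compat_l.
case: (Rle_lt_dec 0 (N / 3 * Lg - 4 * N)) => Hb0.
  have H1 := Hb Hb0.
  have H2 : ((N - 2) / 3 * (N / 3 * Lg - 4 * N) <= K * (N / 3 * Lg - 4 * N))%R.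
    by apply: Rmult_le_compat_r.
  nra.
have H3 : (N * (N / 3 * Lg) <= N * (4 * N))%R by apply: Rmult_le_compat_l; lra.
nra.
Qed.

Lemma part1 d : exists c : R, forall n : nat, exists e : rel 'I_n,
     simple_graph e /\ connected e /\
     exists S : {set 'I_n}, n %/ 3 <= #|S| /\
     forall F, routing_scheme e F -> stretch_lt2 e F ->
       (forall u, u \in S ->
          KC_ge d (enc_local F u) (INR n / 3 * log2 (INR n) - c * INR n)%R) /\
       (forall desc : 'I_n -> seq bool,
          (forall u, describes d (desc u) (enc_local F u)) ->
          (INR n ^ 2 / 9 * log2 (INR n) - c * INR n ^ 2
             <= INR (\sum_(u < n) size (desc u)))%R).
Proof.
exists 4%R => n.
pose k := n %/ 3.
have Hn : 3 * k <= n by rewrite /k; lia.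
pose t := trunc_log 2 k`!.
pose P (sg : 'S_k) N := exists F (u : 'I_n), routing_scheme (@HG k sg n) F /\
   stretch_lt2 (@HG k sg n) F /\ nat_of_ord u < k /\ eval d [:: N] (enc_local F u).
have Hinj : forall x y N, P x N -> P y N -> x = y.
  move=> s1 s2 N [F1 [u1 [HF1 [Hs1 [Hu1 E1]]]]] [F2 [u2 [HF2 [Hs2 [Hu2 E2]]]]].
  have := eval_det E1 E2; rewrite !enc_localE => /code_seq_inj ET.
  have T1 := @HG_table k s1 n (@HG k s1 n) F1 u1 Hn (fun _ _ => erefl) HF1 Hs1 Hu1.
  have T2 := @HG_table k s2 n (@HG k s2 n) F2 u2 Hn (fun _ _ => erefl) HF2 Hs2 Hu2.
  apply/permP => J.
  pose J' := ((s2^-1)%g (s1 J)).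
  have EJ' : s2 J' = s1 J by rewrite /J' permKV.
  have := T2 J'; rewrite -ET EJ' T1 => [[]] EE.
  have EJ : J' = J by apply: ord_inj; lia.
  by rewrite -EJ' EJ.
have [A [HA HAg]] := count_good t Hinj.
have Hf := fact_gt0 k.
have Ht : expn 2 t <= k`! by apply: trunc_logP.
have : 0 < #|A|.
  rewrite card_Sn in HA.
  have : 0 < expn 2 t by rewrite expn_gt0.
  lia.
case/card_gt0P => sg Hsg.
exists (@HG k sg n); split; first by split; [apply: HG_sym | apply: HG_irr].
split; first exact: HG_conn.
have Hkn : k <= n by lia.
exists [set widen_ord Hkn i | i : 'I_k]; split.
  rewrite card_imset ?card_ord // => x y /(congr1 (@nat_of_ord _)) /= E; exact: ord_inj E.
move=> F HF Hs.
have Hnode : forall u, u \in [set widen_ord Hkn i | i : 'I_k] ->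
    KC_ge d (enc_local F u) (INR n / 3 * log2 (INR n) - 4 * INR n)%R.
  move=> u /imsetP [i _ ->] s Hd.
  have Hi : nat_of_ord (widen_ord Hkn i) < k by rewrite /=.
  have Hts := HAg _ Hsg s (ex_intro _ F (ex_intro _ (widen_ord Hkn i) (conj HF (conj Hs (conj Hi Hd))))).
  apply: Rle_trans (INRle Hts).
  apply: part1_real; first by [].
    by have := ltn_ord i; lia.
  exact: log2_fact_lt.
split; first exact: Hnode.
move=> desc Hdesc.
have HN := INRge0 n.
apply: (@sum_real _ (INR k)).
- exact: HN.
- case: (posnP n) => Hn0.
    rewrite Hn0 /log2 /= ln0 /Rdiv Rmult_0_l; lra.
  by apply: log2_nonneg; rewrite -[1%R]/(INR 1); apply: INRle.
- exact: log2_le_n.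
- have : (INR n <= INR (3 * k + 2))%R by apply: INRle; rewrite /k; lia.
  rewrite INRadd INRmul /=; lra.
- exact: INRge0.
- move=> Hb; apply: sum_lb => //.
  move=> u Hu; apply: (Hnode u _ (desc u) (Hdesc u)).
  by apply/imsetP; exists (Ordinal Hu) => //; apply: ord_inj.
Qed.

Unset Implicit Arguments.
Theorem theorem11 (d : prf) (Hd : optimal d) :
  (* general n: labeled graphs on n nodes, bound at n/3 nodes and in total *)
  (exists c : R, forall n : nat, exists e : rel 'I_n,
     simple_graph e /\ connected e /\
     exists S : {set 'I_n}, n %/ 3 <= #|S| /\
     forall F, routing_scheme e F -> stretch_lt2 e F ->
       (forall u, u \in S ->
          KC_ge d (enc_local F u) (INR n / 3 * log2 (INR n) - c * INR n)%R) /\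
       (forall desc : 'I_n -> seq bool,
          (forall u, describes d (desc u) (enc_local F u)) ->
          (INR n ^ 2 / 9 * log2 (INR n) - c * INR n ^ 2
             <= INR (\sum_(u < n) size (desc u)))%R)) /\
  (* n = 3k: G_k works whenever C(pi) >= k log k - O(k) *)
  (forall c0 : R, exists c : R, forall (k : nat) (sigma : 'S_k),
     KC_ge d (enc_perm sigma) (INR k * log2 (INR k) - c0 * INR k)%R ->
     Gk_good d c sigma) /\
  (* n = 3k: at least (1 - 2^-k) k! such labeled graphs G_k *)
  (exists c : R, forall k : nat, exists A : {set 'S_k},
     ((1 - (1/2) ^ k) * INR (k`!) <= INR #|A|)%R /\
     forall sigma, sigma \in A -> Gk_good d c sigma).

Proof.
split; first exact: part1.
split; first exact: part2.
exact: part3.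
Qed.
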